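(* Let $\mathcal C$ be the UM simplex $(n,k)$ code and consider the nodes of $c_{\rm total}=u_{\rm total}G_{\rm total}$. Then: (1) any erasure pattern with at most $2^{k-1}$ erasures allows for parallel $2$-repair; (2) any erasure pattern with at most $2^k-1$ erasures allows for parallel $3$-repair; (3) any erasure pattern with at most $2^k$ erasures allows for parallel $4$-repair; (4) any erasure pattern with at most $2^k+2^{k-1}-1=d_{free}-1$ erasures allows for parallel $5$-repair.
   Context: Let $k\ge2$ and let $G\in\mathbb F_2^{k\times(2^k-1)}$ be a generator matrix of the binary simplex code (columns are all distinct nonzero vectors of $\mathbb F_2^k$); set $n=2(2^k-1)$. The UM simplex $(n,k)$ code is the binary convolutional code with encoder $G(D)=G_0+G_1D$, $G_0=[G\ G]$, $G_1=[G\ 0]\in\mathbb F_2^{k\times n}$; its free distance is $3\cdot2^{k-1}$. For $u_{\rm total}=(u_0,\dots,u_s)\in\mathbb F_2^{(s+1)k}$, $c_{\rm total}=(c_0,\dots,c_{s+1})=u_{\rm total}G_{\rm total}$, where $G_{\rm total}\in\mathbb F_2^{(s+1)k\times(s+2)n}$ is the block matrix whose $i$-th block row ($i=0,\dots,s$) has $G_0$ in block column $i$, $G_1$ in block column $i+1$ and zeros elsewhere. Nodes are the coordinates of $c_{\rm total}$, corresponding to the columns $g_1,\dots,g_N$ of $G_{\rm total}$. An erasure pattern is a set of erased nodes; the others are live. A node $c_i$ is related to distinct nodes $c_{j_1},\dots,c_{j_\gamma}$ (all different from $c_i$) if $g_i=g_{j_1}+\dots+g_{j_\gamma}$. An erased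 node allows for $r$-repair if it is related to $\gamma\le r$ live nodes. An erasure pattern allows for parallel $r$-repair if each erased node allows for $r$-repair with respect to the original set of live nodes. *)

(* Defs.v *)
From mathcomp Require Import all_boot all_algebra.
Set Implicit Arguments. Unset Strict Implicit. Unset Printing Implicit Defensive.
Import GRing.Theory.
Local Open Scope ring_scope.

Notation F2 := 'F_2.

Definition um_n (k : nat) : nat := (2 * (2 ^ k - 1))%N.

(* G is a generator matrix of the binary simplex code: its 2^k-1 columns are
   pairwise distinct and nonzero (hence exactly all nonzero vectors of F_2^k). *)
Definition is_simplex_gen (k : nat) (G : 'M[F2]_(k, 2 ^ k - 1)) : Prop :=
  injective (fun j => col j G) /\ forall j, col j G != 0.

Definition UM_G0 k (G : 'M[F2]_(k, 2 ^ k - 1)) : 'M[F2]_(k, 2 ^ k - 1 + (2 ^ k - 1)) :=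
  row_mx G G.
Definition UM_G1 k (G : 'M[F2]_(k, 2 ^ k - 1)) : 'M[F2]_(k, 2 ^ k - 1 + (2 ^ k - 1)) :=
  row_mx G 0.

(* entry access by natural-number indices (0 outside the range) *)
Definition mx_at (R : nmodType) m p (A : 'M[R]_(m, p)) (a b : nat) : R :=
  match @insub _ (fun x => x < m)%N 'I_m a, @insub _ (fun x => x < p)%N 'I_p b with
  | Some i, Some j => A i j
  | _, _ => 0
  end.

(* G_total : block row i (i = 0..s) has G_0 in block column i, G_1 in block
   column i+1, zeros elsewhere. *)
Definition Gtotal k s (G : 'M[F2]_(k, 2 ^ k - 1)) :
  'M[F2]_(s.+1 * k, s.+2 * um_n k) :=
  \matrix_(r, c)
    let i := (r %/ k)%N in let a := (r %% k)%N in
    let j := (c %/ um_n k)%N in let b := (c %% um_n k)%N in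
    if j == i then mx_at (UM_G0 G) a b
    else if j == i.+1 then mx_at (UM_G1 G) a b
    else 0.

Definition related (F : nmodType) m N (M : 'M[F]_(m, N)) (i : 'I_N) (J : {set 'I_N}) : Prop :=
  [/\ (0 < #|J|)%N, i \notin J & col i M = \sum_(j in J) col j M].

Definition allows_repair (F : nmodType) m N (M : 'M[F]_(m, N)) (r : nat)
    (live : {set 'I_N}) (i : 'I_N) : Prop :=
  exists J : {set 'I_N}, [/\ related M i J, J \subset live & (#|J| <= r)%N].

Definition parallel_repair (F : nmodType) m N (M : 'M[F]_(m, N)) (r : nat)
    (E : {set 'I_N}) : Prop :=
  forall i, i \in E -> allows_repair M r (~: E) i.

(* Main.v *)
Require Import Defs.
From mathcomp Require Import all_boot all_algebra.
From mathcomp Require Import zify.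
Set Implicit Arguments. Unset Strict Implicit. Unset Printing Implicit Defensive.
Import GRing.Theory.


Lemma F2_addxx (x : 'F_2) : (x + x = 0)%R.
Proof. by apply/val_inj; case: x => -[|[|]]. Qed.

Lemma mxF2_addxx m n (x : 'M['F_2]_(m, n)) : (x + x = 0)%R.
Proof. by apply/matrixP => i j; rewrite !mxE F2_addxx. Qed.

Lemma hit_le (I : finType) (L : seq {set I}) (E : {set I}) :
  (forall J, J \in L -> ~~ (J \subset ~: E)) ->
  (size L <= \sum_(u in E) count (fun J : {set I} => u \in J) L)%N.
Proof.
elim: L => [|J L IH] H /=; first by [].
rewrite big_split /=.
have h1 : (0 < \sum_(u in E) (u \in J : nat))%N.
  have /subsetPn [u uJ] : ~~ (J \subset ~: E) by apply: H; rewrite inE eqxx.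
  rewrite inE negbK => uE.
  by rewrite (bigD1 u) //= uJ.
have := IH (fun J' hJ' => H J' (mem_behead (s:=J::L) hJ')).
lia.
Qed.

Lemma count_hit (I : finType) (L : seq {set I}) (E : {set I}) (c : I) (w : nat) :
  c \in E -> (forall J, J \in L -> c \notin J) ->
  (forall u, count (fun J : {set I} => u \in J) L <= w)%N ->
  (w * (#|E| - 1) < size L)%N ->
  exists2 J, J \in L & J \subset ~: E.
Proof.
move=> cE cL hw hs.
case: (boolP (has (fun J : {set I} => J \subset ~: E) L)) => [/hasP[J JL JE]|]; first by exists J.
move/hasPn=> H; have := hit_le H.
rewrite (bigD1 c) //=.
have -> : count (fun J : {set I} => c \in J) L = 0%N.
  by apply/eqP; rewrite eqn0Ngt -has_count; apply/hasPn => J /cL.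
have : (\sum_(i in E | i != c) count (fun J : {set I} => i \in J) L <= \sum_(i in E | i != c) w)%N.
  by apply: leq_sum => i _.
have -> : (\sum_(i in E | i != c) w = #|[predD1 E & c]| * w)%N.
  rewrite -sum_nat_const; apply: eq_bigl => i; rewrite !inE andbC //.
have := cardD1 c E; rewrite cE.
move=> h1 h2 h3; exfalso; move: hs; rewrite h1 /= add1n subSS subn0 mulnC; have := leq_trans h3 h2; move=> a b; have := leq_trans b a; by rewrite ltnn.
Qed.

Lemma count_le1 (T : eqType) (P : pred T) (S : seq T) :
  uniq S -> (forall a a', a \in S -> a' \in S -> P a -> P a' -> a = a') ->
  (count P S <= 1)%N.
Proof.
elim: S => [|x S IH] //= /andP [xS uS] H.
case: (boolP (P x)) => Px /=.
- have -> : count P S = 0%N.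
    apply/eqP; rewrite eqn0Ngt -has_count; apply/hasPn => y yS; apply/negP => Py.
    have e := H x y (mem_head _ _) (mem_behead (s := x :: S) yS) Px Py.
    by move: xS; rewrite e yS.
  by [].
- by rewrite add0n; apply: IH => // a a' aS a'S; apply: H; rewrite inE ?aS ?a'S orbT.
Qed.

Lemma ar2 x p : (2 <= p)%N -> (x <= p)%N -> (2 * (x - 1) < 2 * p - 2 + 2)%N.
Proof. lia. Qed.
Lemma ar3 x p : (2 <= p)%N -> (x <= 2 * p - 1)%N -> (1 * (x - 1) < 2 * p - 2 + 1)%N.
Proof. lia. Qed.
Lemma ar4 x p : (2 <= p)%N -> (x <= 2 * p)%N -> (1 * (x - 1) < 2 * p - 2 + 2)%N.
Proof. lia. Qed.
Lemma ar5 x p : (2 <= p)%N -> (x <= 3 * p - 1)%N ->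
  (2 * (x - 1) < 2 * p - 2 + (2 * p - 2 + (2 * p - 2 + 4)))%N.
Proof. lia. Qed.

Lemma count_le1b (T : eqType) (P : pred T) (S : seq T) (b : bool) :
  uniq S -> (forall a a', a \in S -> a' \in S -> P a -> P a' -> a = a') ->
  (forall a, a \in S -> P a -> b) -> (count P S <= b)%N.
Proof.
case: b => [uS H _|_ _ H]; first exact: count_le1.
by rewrite leqn0 eqn0Ngt -has_count; apply/hasPn => a aS; apply/negP => /(H _ aS).
Qed.

Lemma ar6 x p m : (2 <= p)%N -> m = (2 * p - 1)%N -> (x <= 3 * p - 1)%N -> (1 * (x - 1) < m.-1 + m)%N.
Proof. lia. Qed.

Section Generic.
Variables (m0 N : nat) (M : 'M['F_2]_(m0, N)) (B : finType) (f : B -> 'cV['F_2]_m0).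
Variables (sm : B -> B -> B) (v : B) (c : 'I_N) (off : 'I_N -> B) (cls : 'I_N -> nat).
Hypothesis hf : forall a, a != v -> (f a + f (sm a v))%R = f v.
Hypothesis hsv : forall a, a != v -> sm a v != v.
Hypothesis hsa : forall a, a != v -> sm a v != a.
Hypothesis hsi : forall a a', a != v -> a' != v -> sm a v = sm a' v -> a = a'.
Hypothesis hcv : off c = v.
Hypothesis hc0 : cls c = 0%N.
Hypothesis hcol : col c M = f v.

Definition good r (J : {set 'I_N}) :=
  [/\ (0 < #|J|)%N, c \notin J, col c M = (\sum_(u in J) col u M)%R & (#|J| <= r)%N].

Definition labeled (P : B -> {set 'I_N}) t := forall a u, u \in P a -> off u = a /\ cls u = t.
Definition sums (P : B -> {set 'I_N}) := forall a, (\sum_(u in P a) col u M)%R = f a.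

Lemma good_mono r r' J : (r <= r')%N -> good r J -> good r' J.
Proof. by move=> le [h1 h2 h3 h4]; split => //; apply: leq_trans le. Qed.

Lemma from_list r w (L : seq {set 'I_N}) (E : {set 'I_N}) :
  c \in E -> (forall J, J \in L -> good r J) ->
  (forall u, count (fun J : {set 'I_N} => u \in J) L <= w)%N ->
  (w * (#|E| - 1) < size L)%N -> allows_repair M r (~: E) c.
Proof.
move=> cE hL hw hs.
have [J JL JE] : exists2 J, J \in L & J \subset ~: E.
  apply: (count_hit cE) => // J /hL []; done.
by have [h1 h2 h3 h4] := hL J JL; exists J; split.
Qed.

Lemma pair_good P Q tP tQ sP sQ a :
  labeled P tP -> labeled Q tQ -> (forall a, 0 < #|P a|)%N ->
  (forall a, #|P a| <= sP)%N -> (forall a, #|Q a| <= sQ)%N -> sums P -> sums Q ->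
  a != v -> good (sP + sQ) (P a :|: Q (sm a v)).
Proof.
move=> lP lQ nP cP cQ sPf sQf av.
have dj : [disjoint P a & Q (sm a v)].
  rewrite disjoint_subset; apply/subsetP => u /lP [o1 _]; rewrite inE; apply/negP => /lQ [o2 _].
  by move: (hsa av); rewrite -o2 -o1 eqxx.
split.
- by apply: leq_trans (nP a) _; apply: subset_leq_card; apply: subsetUl.
- rewrite inE negb_or; apply/andP; split; apply/negP.
  + by move=> /lP [e _]; move: av; rewrite -e hcv eqxx.
  + by move=> /lQ [e _]; move: (hsv av); rewrite -e hcv eqxx.
- rewrite (eq_bigl [predU P a & Q (sm a v)]); last by move=> u; rewrite !inE.
  by rewrite bigU //= sPf sQf hf.
- by rewrite cardsU; apply: leq_trans (leq_subr _ _) _; apply: leq_add.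
Qed.

Lemma single_good P t s a :
  labeled P t -> t != 0%N -> (forall a, 0 < #|P a| <= s)%N -> sums P -> a = v ->
  good s (P a).
Proof.
move=> lP t0 cP sPf ->; have /andP [h1 h2] := cP v; split => //.
- by apply/negP => /lP [_ e]; move: t0; rewrite -e hc0.
- by rewrite sPf.
Qed.

Definition S := enum [pred a | a != v].

Lemma S_uniq : uniq S. Proof. exact: enum_uniq. Qed.
Lemma mem_S a : (a \in S) = (a != v). Proof. by rewrite mem_enum. Qed.
Lemma size_S : size S = #|B|.-1.
Proof. by rewrite -cardE -(cardC1 v); apply: eq_card. Qed.

Lemma cnt_off u X :
  (count (fun a => (off u == a) && X) S <= X && (off u != v))%N.
Proof.
case: X; last by rewrite (eq_count (a2 := pred0)) ?count_pred0 // => a; rewrite andbF.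
case: (eqVneq (off u) v) => [e|ne] /=.
- rewrite leqn0 eqn0Ngt -has_count; apply/hasPn => a; rewrite mem_S andbT.
  by apply: contra => /eqP <-; rewrite e.
- apply: count_le1; first exact: S_uniq.
  by move=> a a' _ _; rewrite !andbT => /eqP e1 /eqP e2; rewrite -e1 -e2.
Qed.

Lemma cnt_sm u X :
  (count (fun a => (off u == sm a v) && X) S <= X && (off u != v))%N.
Proof.
case: X; last by rewrite (eq_count (a2 := pred0)) ?count_pred0 // => a; rewrite andbF.
case: (eqVneq (off u) v) => [e|ne] /=.
- rewrite leqn0 eqn0Ngt -has_count; apply/hasPn => a; rewrite mem_S andbT => av.
  by rewrite e eq_sym hsv.
- apply: count_le1; first exact: S_uniq.
  move=> a a'; rewrite !mem_S !andbT => av a'v /eqP e1 /eqP e2.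
  by apply: hsi => //; rewrite -e1 -e2.
Qed.

Lemma cnt_pair u P Q tP tQ :
  labeled P tP -> labeled Q tQ ->
  (count (fun J : {set 'I_N} => u \in J) [seq P a :|: Q (sm a v) | a <- S] <=
   ((cls u == tP) && (off u != v)) + ((cls u == tQ) && (off u != v)))%N.
Proof.
move=> lP lQ; rewrite count_map.
apply: leq_trans (leq_add (cnt_off u (cls u == tP)) (cnt_sm u (cls u == tQ))).
rewrite -count_predUI; apply: leq_trans (leq_addr _ _).
apply: sub_count => a /=; rewrite inE => /orP [/lP [e1 e2]|/lQ [e1 e2]];
  by rewrite e1 e2 !eqxx ?orbT.
Qed.

Lemma cnt_single u P t :
  labeled P t -> ((u \in P v) <= (cls u == t) && (off u == v))%N.
Proof. by move=> lP; case: (boolP (u \in P v)) => // /lP [-> ->]; rewrite !eqxx. Qed.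


Theorem generic_main (A U D : B -> {set 'I_N}) (E : {set 'I_N}) (p : nat) :
  labeled A 0 -> labeled U 1 -> labeled D 2 -> sums A -> sums U -> sums D ->
  (forall a, #|A a| = 1%N) -> (forall a, 0 < #|U a| <= 2)%N -> (forall a, 0 < #|D a| <= 4)%N ->
  (2 <= p)%N -> #|B| = (2 * p - 1)%N -> c \in E ->
  [/\ (#|E| <= p)%N -> allows_repair M 2 (~: E) c,
      (#|E| <= 2 * p - 1)%N -> allows_repair M 3 (~: E) c,
      (#|E| <= 2 * p)%N -> allows_repair M 4 (~: E) c &
      (#|E| <= 3 * p - 1)%N -> allows_repair M 5 (~: E) c].
Proof.
move=> lA lU lD sA sU sD cA cU cD hp hB cE.
have nA a : (0 < #|A a|)%N by rewrite cA.
have cA' a : (#|A a| <= 1)%N by rewrite cA.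
have cU' a : (#|U a| <= 2)%N by case/andP: (cU a).
have cD' a : (#|D a| <= 4)%N by case/andP: (cD a).
have gU : good 2 (U v) by apply: (single_good lU).
have gD : good 4 (D v) by apply: (single_good lD).
have hS : size S = (2 * p - 2)%N by rewrite size_S hB; lia.
have cntU u := cnt_single u lU.
have cntD u := cnt_single u lD.
split => hE.
- apply: (@from_list 2 2 ([seq A a :|: A (sm a v) | a <- S] ++ [:: U v; U v])) => //.
  + move=> J; rewrite mem_cat => /orP [/mapP [a aS ->]|]; last by rewrite !inE => /orP [] /eqP ->.
    by apply: (pair_good lA lA nA cA' cA' sA sA); rewrite -mem_S.
  + move=> u; rewrite count_cat /=; have := cnt_pair u lA lA; have := cntU u.
    by case: (off u == v); case: (cls u) => [|[|[|x]]] /=; clear; lia.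
  + by rewrite size_cat size_map hS /=; apply: ar2 hp hE.
- apply: (@from_list 3 1 ([seq A a :|: U (sm a v) | a <- S] ++ [:: U v])) => //.
  + move=> J; rewrite mem_cat => /orP [/mapP [a aS ->]|]; last by rewrite !inE => /eqP ->; apply: good_mono gU.
    by apply: (pair_good lA lU nA cA' cU' sA sU); rewrite -mem_S.
  + move=> u; rewrite count_cat /=; have := cnt_pair u lA lU; have := cntU u.
    by case: (off u == v); case: (cls u) => [|[|[|x]]] /=; clear; lia.
  + by rewrite size_cat size_map hS /=; apply: ar3 hp hE.
- apply: (@from_list 4 1 ([seq A a :|: U (sm a v) | a <- S] ++ [:: U v; D v])) => //.
  + move=> J; rewrite mem_cat => /orP [/mapP [a aS ->]|]; last first.
      by rewrite !inE => /orP [] /eqP -> //; apply: good_mono gU.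
    by apply: good_mono (pair_good lA lU nA cA' cU' sA sU _) => //; rewrite -mem_S.
  + move=> u; rewrite count_cat /=; have := cnt_pair u lA lU; have := cntU u; have := cntD u.
    by case: (off u == v); case: (cls u) => [|[|[|x]]] /=; clear; lia.
  + by rewrite size_cat size_map hS /=; apply: ar4 hp hE.
- apply: (@from_list 5 2 ([seq A a :|: D (sm a v) | a <- S] ++ [seq A a :|: D (sm a v) | a <- S]
     ++ [seq U a :|: U (sm a v) | a <- S] ++ [:: U v; U v; D v; D v])) => //.
  + move=> J; rewrite !mem_cat => /orP [|/orP [|/orP []]] => [/mapP [a aS ->]|/mapP [a aS ->]|/mapP [a aS ->]|].
    * by apply: (pair_good lA lD nA cA' cD' sA sD); rewrite -mem_S.
    * by apply: (pair_good lA lD nA cA' cD' sA sD); rewrite -mem_S.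
    * by apply: good_mono (pair_good lU lU _ cU' cU' sU sU _) => // [a'|]; [case/andP: (cU a')|rewrite -mem_S].
    * by rewrite !inE => /orP [/eqP ->|/orP [/eqP ->|/orP [/eqP ->|/eqP ->]]]; [apply: good_mono gU|apply: good_mono gU|apply: good_mono gD|apply: good_mono gD].
  + move=> u; rewrite !count_cat /=; have := cnt_pair u lA lD; have := cnt_pair u lU lU.
    have := cntU u; have := cntD u.
    by case: (off u == v); case: (cls u) => [|[|[|x]]] /=; clear; lia.
  + by rewrite !size_cat !size_map hS /=; apply: ar5 hp hE.
Qed.

End Generic.


Lemma mx_atE (R : nmodType) p q (A : 'M[R]_(p,q)) a c (ha : (a < p)%N) (hc : (c < q)%N) :
  mx_at A a c = A (Ordinal ha) (Ordinal hc).
Proof.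
rewrite /mx_at (insubT (fun x => x < p)%N ha) (insubT (fun x => x < q)%N hc) //.
Qed.

Section Conc.
Variables (k s : nat) (G : 'M['F_2]_(k, 2 ^ k - 1)).
Local Notation m := (2 ^ k - 1)%N.
Local Notation n := (um_n k).
Local Notation N := (s.+2 * um_n k)%N.
Local Notation M := (Gtotal s G).

Lemma n_eq : n = (m + m)%N.
Proof. by rewrite /um_n; lia. Qed.

Lemma node_lt (j : 'I_s.+2) (h : bool) (b : 'I_m) : (j * n + (h * m + b) < N)%N.
Proof.
have hj := ltn_ord j; have hb := ltn_ord b; rewrite n_eq.
have : (h * m + b < m + m)%N by case: h; lia.
nia.
Qed.

Definition node (j : 'I_s.+2) (h : bool) (b : 'I_m) : 'I_N := Ordinal (node_lt j h b).
Definition nd (j : nat) h b := node (inord j) h b.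
Definition lev (u : 'I_N) := (u %/ n)%N.
Definition half (u : 'I_N) := (m <= u %% n)%N.
Definition offn (u : 'I_N) := (u %% n - half u * m)%N.

Lemma nd_val j h b : (j <= s.+1)%N -> (nd j h b : nat) = (j * n + (h * m + b))%N.
Proof. by move=> hj; rewrite /= inordK. Qed.

Lemma nd_mod j h b : (j <= s.+1)%N -> ((nd j h b) %% n = h * m + b)%N.
Proof.
move=> hj; rewrite nd_val // modnMDl modn_small // n_eq.
have hb := ltn_ord b; case: h; lia.
Qed.

Lemma nd_div j h b : (j <= s.+1)%N -> ((nd j h b) %/ n = j)%N.
Proof.
move=> hj; have hb := ltn_ord b.
rewrite nd_val // divnMDl ?divn_small ?addn0 // n_eq; case: h; lia.
Qed.

Lemma lev_nd j h b : (j <= s.+1)%N -> lev (nd j h b) = j.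
Proof. exact: nd_div. Qed.

Lemma half_nd j h b : (j <= s.+1)%N -> half (nd j h b) = h.
Proof. move=> hj; rewrite /half nd_mod //; have hb := ltn_ord b; case: h; apply/idP/idP; lia. Qed.

Lemma offn_nd j h b : (j <= s.+1)%N -> offn (nd j h b) = b.
Proof. by move=> hj; rewrite /offn half_nd // nd_mod // addKn. Qed.

Lemma nd_inj j h b j' h' b' : (j <= s.+1)%N -> (j' <= s.+1)%N ->
  nd j h b = nd j' h' b' -> [/\ j = j', h = h' & b = b'].
Proof.
move=> hj hj' e; split.
- by rewrite -(@lev_nd j h b hj) e lev_nd.
- by rewrite -(@half_nd j h b hj) e half_nd.
- by apply/val_inj; rewrite /= -(@offn_nd j h b hj) e offn_nd.
Qed.

Lemma nd_surj (u : 'I_N) : exists j h b, [/\ (j <= s.+1)%N & u = nd j h b].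
Proof.
have hu := ltn_ord u.
have npos : (0 < n)%N by move: (nat_of_ord u) hu => x; rewrite lt0n; apply: contraTneq => ->; rewrite muln0.
have hm : (0 < m)%N by move: npos; rewrite n_eq; lia.
have hr : (u %% n < m + m)%N by rewrite -n_eq ltn_mod.
have hj : (u %/ n <= s.+1)%N by rewrite -ltnS ltn_divLR.
case: (ltnP (u %% n) m) => hh.
- exists (u %/ n), false, (Ordinal hh); split => //.
  by apply/val_inj; rewrite /= inordK //= add0n {1}(divn_eq u n).
- have hb : (u %% n - m < m)%N by lia.
  exists (u %/ n), true, (Ordinal hb); split => //.
  by apply/val_inj; rewrite /= inordK //= mul1n subnKC // {1}(divn_eq u n).
Qed.

Definition E (i : nat) (x : 'cV['F_2]_k) : 'cV['F_2]_(s.+1 * k) :=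
  \col_r (if (r %/ k == i)%N then mx_at x (r %% k) 0 else 0)%R.
Definition Edn (j : nat) (x : 'cV['F_2]_k) : 'cV['F_2]_(s.+1 * k) :=
  if j is j'.+1 then E j' x else 0%R.
Definition g (b : 'I_m) := col b G.

Lemma E_add i x y : E i (x + y) = (E i x + E i y)%R.
Proof.
apply/matrixP => r z; rewrite !mxE; case: ifP => _; last by rewrite addr0.
by rewrite /mx_at; case: (@insub _ (fun x => x < k)%N 'I_k (r %% k)%N) => [a|]; case: (@insub _ (fun x => x < 1)%N 'I_1 0%N) => [c|]; rewrite ?mxE ?addr0.
Qed.

Lemma Edn_add i x y : Edn i (x + y) = (Edn i x + Edn i y)%R.
Proof. by case: i => [|i] /=; rewrite ?addr0 ?E_add. Qed.

Lemma E_gt i x : (s < i)%N -> E i x = 0%R.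
Proof.
move=> si; apply/matrixP => r z; rewrite !mxE; case: ifP => // /eqP e.
have hr := ltn_ord r.
have kpos : (0 < k)%N by move: (nat_of_ord r) hr => xr; rewrite lt0n; apply: contraTneq => ->; rewrite muln0.
by move: hr; rewrite -ltn_divLR // e ltnNge si.
Qed.

Lemma col_nd j h b : (j <= s.+1)%N ->
  col (nd j h b) M = (if h then E j (g b) else E j (g b) + Edn j (g b))%R.
Proof.
move=> hj; apply/matrixP => r z; rewrite (ord1 z).
have hr := ltn_ord r.
have kpos : (0 < k)%N by move: (nat_of_ord r) hr => xr; rewrite lt0n; apply: contraTneq => ->; rewrite muln0.
have ha : (r %% k < k)%N by rewrite ltn_mod.
have hb := ltn_ord b.
have hc : (h * m + b < m + m)%N by case: h; lia.
rewrite !mxE /= nd_div // nd_mod // /UM_G0 /UM_G1.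
rewrite !(mx_atE _ ha hc).
have h01 : (0 < 1)%N by [].
case: h hc => hc /=.
- have -> : Ordinal hc = rshift m b by apply/val_inj => /=; lia.
  rewrite !row_mxEr !mxE (mx_atE _ ha h01) !mxE eq_sym.
  by case: ifP => // _; case: ifP.
- have -> : Ordinal hc = lshift m b by apply/val_inj.
  rewrite !row_mxEl !mxE (mx_atE _ ha h01) !mxE eq_sym.
    case: j hj => [|j] hj /=; rewrite ?mxE ?addr0.
  + by case: eqP => //; rewrite ?(mx_atE _ ha h01).
  + rewrite (mx_atE _ ha h01) eqSS.
    case: (eqVneq (r %/ k)%N j.+1) => [->|ne].
      by rewrite (gtn_eqF (ltnSn j)) addr0.
    by rewrite add0r eq_sym; case: eqP => // _; rewrite mxE.
Qed.


Hypothesis hG : is_simplex_gen G.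

Lemma g_inj : injective g.
Proof. by move: hG; rewrite /is_simplex_gen => -[h _]. Qed.
Lemma g_nz b : g b != 0%R.
Proof. by move: hG; rewrite /is_simplex_gen => -[_ h]; apply: h. Qed.

Lemma g_surj (x : 'cV['F_2]_k) : x != 0%R -> exists b, g b = x.
Proof.
move=> xnz.
have sub : [set g b | b in 'I_m] \subset [set~ 0%R].
  by apply/subsetP => y /imsetP [b _ ->]; rewrite !inE g_nz.
have ceq : #|[set g b | b in 'I_m]| = #|[set~ (0 : 'cV['F_2]_k)%R]|.
  rewrite card_imset; last exact: g_inj.
  rewrite cardsC1 card_ord card_mx card_Fp // muln1 /=.
  by rewrite subn1.
have : x \in [set~ 0%R] by rewrite !inE.
have /eqP <- : [set g b | b in 'I_m] == [set~ 0%R] by rewrite eqEcard sub ceq leqnn.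
by case/imsetP => b _ ->; exists b.
Qed.

Lemma addxx_eq (x y : 'cV['F_2]_k) : (x + y = 0)%R -> x = y.
Proof. by move=> e; rewrite -[x]addr0 -(mxF2_addxx y) addrA e add0r. Qed.

Definition sm (a b : 'I_m) : 'I_m := odflt a [pick c | g c == (g a + g b)%R].

Lemma sm_spec a b : a != b -> g (sm a b) = (g a + g b)%R.
Proof.
move=> ne; rewrite /sm; case: pickP => [c /eqP //|H].
have nz : (g a + g b)%R != 0%R.
  by apply: contra ne => /eqP /addxx_eq /g_inj ->.
by have [c hc] := g_surj nz; move: (H c); rewrite hc eqxx.
Qed.

Lemma sm_v v a : a != v -> (g a + g (sm a v))%R = g v.
Proof. by move=> ne; rewrite sm_spec // addrA mxF2_addxx add0r. Qed.

Lemma sm_nev v a : a != v -> sm a v != v.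
Proof.
move=> ne; apply/eqP => e; have := sm_spec ne; rewrite e => /esym.
by rewrite -{2}[g v]add0r => /addIr /eqP; rewrite (negbTE (g_nz a)).
Qed.

Lemma sm_nea v a : a != v -> sm a v != a.
Proof.
move=> ne; apply/eqP => e; have := sm_spec ne; rewrite e => /esym.
by rewrite -{2}[g a]addr0 => /addrI /eqP; rewrite (negbTE (g_nz v)).
Qed.

Lemma sm_inj v a a' : a != v -> a' != v -> sm a v = sm a' v -> a = a'.
Proof.
by move=> ne ne' e; apply: g_inj; have := sm_spec ne; rewrite e sm_spec // => /addIr.
Qed.


Definition colkey (q : nat * bool) x := if q.2 then E q.1 x else (E q.1 x + Edn q.1 x)%R.
Definition keyset (K : seq (nat * bool)) (a : 'I_m) : {set 'I_N} :=
  [set u in [seq nd q.1 q.2 a | q <- K]].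
Definition offI (v : 'I_m) (u : 'I_N) : 'I_m := insubd v (offn u).
Definition clsK (KA KU : seq (nat * bool)) (u : 'I_N) : nat :=
  if (lev u, half u) \in KA then 0%N else if (lev u, half u) \in KU then 1%N else 2%N.

Lemma offI_nd v j h b : (j <= s.+1)%N -> offI v (nd j h b) = b.
Proof. by move=> hj; apply/val_inj; rewrite /offI offn_nd // insubdK // unfold_in ltn_ord. Qed.

Lemma keyset_uniq K a : all (fun q => q.1 <= s.+1)%N K -> uniq K ->
  uniq [seq nd q.1 q.2 a | q <- K].
Proof.
move=> /allP hK uK; rewrite map_inj_in_uniq // => -[j h] [j' h'] /hK /= hj /hK /= hj' e.
by have [-> -> _] := nd_inj hj hj' e.
Qed.

Lemma keyset_card K a : all (fun q => q.1 <= s.+1)%N K -> uniq K -> #|keyset K a| = size K.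
Proof.
by move=> hK uK; rewrite /keyset cardsE; move/card_uniqP: (keyset_uniq a hK uK) ->; rewrite size_map.
Qed.

Lemma keyset_sum K a : all (fun q => q.1 <= s.+1)%N K -> uniq K ->
  (\sum_(u in keyset K a) col u M)%R = (\sum_(q <- K) colkey q (g a))%R.
Proof.
move=> hK uK.
rewrite (eq_bigl (mem [seq nd q.1 q.2 a | q <- K])); last by move=> u; rewrite /keyset inE.
rewrite -big_uniq ?keyset_uniq // big_map; apply: eq_big_seq => -[j h] /(allP hK) /= hj.
by rewrite col_nd.
Qed.

Lemma keyset_mem K a u : u \in keyset K a -> exists2 q, q \in K & u = nd q.1 q.2 a.
Proof. by rewrite inE => /mapP. Qed.

Theorem key_main (KU KD : seq (nat * bool)) (j0 : nat) (h0 : bool) (v : 'I_m)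
  (L : 'cV['F_2]_k -> 'cV['F_2]_(s.+1 * k)) (Er : {set 'I_N}) (p : nat) :
  (j0 <= s.+1)%N -> all (fun q => q.1 <= s.+1)%N KU -> all (fun q => q.1 <= s.+1)%N KD ->
  uniq KU -> uniq KD -> (j0, h0) \notin KU -> (j0, h0) \notin KD ->
  (forall q, q \in KD -> q \notin KU) ->
  (0 < size KU <= 2)%N -> (0 < size KD <= 4)%N ->
  (forall x y, L (x + y) = L x + L y)%R ->
  (forall x, colkey (j0, h0) x = L x)%R ->
  (forall x, \sum_(q <- KU) colkey q x = L x)%R ->
  (forall x, \sum_(q <- KD) colkey q x = L x)%R ->
  (2 <= p)%N -> m = (2 * p - 1)%N -> nd j0 h0 v \in Er ->
  [/\ (#|Er| <= p)%N -> allows_repair M 2 (~: Er) (nd j0 h0 v),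
      (#|Er| <= 2 * p - 1)%N -> allows_repair M 3 (~: Er) (nd j0 h0 v),
      (#|Er| <= 2 * p)%N -> allows_repair M 4 (~: Er) (nd j0 h0 v) &
      (#|Er| <= 3 * p - 1)%N -> allows_repair M 5 (~: Er) (nd j0 h0 v)].
Proof.
move=> hj0 bU bD uU uD nAU nAD nUD sU sD Ladd LA LU LD hp hm cE.
set KA := [:: (j0, h0)].
have bA : all (fun q => q.1 <= s.+1)%N KA by rewrite /= hj0.
have uA : uniq KA by [].
set c := nd j0 h0 v.
set cls := clsK KA KU.
have hf a : a != v -> (L (g a) + L (g (sm a v)))%R = L (g v).
  by move=> av; rewrite -Ladd sm_v.
have hcv : offI v c = v by rewrite offI_nd.
have hc0 : cls c = 0%N by rewrite /cls /clsK lev_nd // half_nd // mem_head.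
have hcol : col c M = L (g v) by rewrite col_nd // -LA.
have lab K t : all (fun q => q.1 <= s.+1)%N K ->
    (forall q, q \in K -> clsK KA KU (nd q.1 q.2 v) = t) ->
    labeled (offI v) cls (keyset K) t.
  move=> bK hK a u /keyset_mem [[j h] qK ->] /=.
  have hj : (j <= s.+1)%N by have := allP bK _ qK.
  split; first by rewrite offI_nd.
  by rewrite -(hK _ qK) /cls /clsK /= !lev_nd // !half_nd.
have sums K : all (fun q => q.1 <= s.+1)%N K -> uniq K ->
    (forall x, \sum_(q <- K) colkey q x = L x)%R -> sums M (fun a => L (g a)) (keyset K).
  by move=> bK uK hK a; rewrite keyset_sum // hK.
have hm' : #|'I_m| = (2 * p - 1)%N by rewrite card_ord.
apply: (generic_main (sm := sm) (v := v) (off := offI v) (cls := cls) hf (@sm_nev v) (@sm_nea v)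
   (@sm_inj v) hcv hc0 hcol _ _ _ _ _ _ _ _ _ hp hm' cE).
- apply: (lab _ _ bA) => q; rewrite inE => /eqP -> /=.
  by rewrite /clsK lev_nd // half_nd // mem_head.
- apply: (lab _ _ bU) => -[j h] qU /=.
  have hj : (j <= s.+1)%N by have := allP bU _ qU.
  rewrite /clsK lev_nd // half_nd // qU.
  by case: ifP => //; rewrite inE => /eqP e; move: nAU; rewrite -e qU.
- apply: (lab _ _ bD) => -[j h] qD /=.
  have hj : (j <= s.+1)%N by have := allP bD _ qD.
  rewrite /clsK lev_nd // half_nd // (negbTE (nUD _ qD)).
  by case: ifP => //; rewrite inE => /eqP e; move: nAD; rewrite -e qD.
- apply: sums => // x; rewrite big_seq1; exact: LA.
- exact: sums.
- exact: sums.
- by move=> a; rewrite keyset_card.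
- by move=> a; rewrite keyset_card.
- by move=> a; rewrite keyset_card.
Qed.

Ltac comb := first [ done | (rewrite /= ?inE ?xpair_eqE /=; lia)
  | (move=> [? ?]; rewrite /= ?inE ?xpair_eqE /=; lia) ].

Lemma caseY j v (Er : {set 'I_N}) p : (j <= s)%N -> (2 <= p)%N -> m = (2 * p - 1)%N -> nd j true v \in Er ->
  [/\ (#|Er| <= p)%N -> allows_repair M 2 (~: Er) (nd j true v),
      (#|Er| <= 2 * p - 1)%N -> allows_repair M 3 (~: Er) (nd j true v),
      (#|Er| <= 2 * p)%N -> allows_repair M 4 (~: Er) (nd j true v) &
      (#|Er| <= 3 * p - 1)%N -> allows_repair M 5 (~: Er) (nd j true v)].
Proof.
move=> hj hp hm cE.
case: j hj cE => [|j] hj cE.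
- apply: (key_main (KU := [:: (1, false); (1, true)]) (KD := [:: (0, false)]) (L := E 0)) => //;
    try comb.
  + exact: E_add.
  + move=> x; rewrite !big_cons big_nil /colkey /=.
    by rewrite addr0 [(E 1%N x + _)%R]addrC -addrA mxF2_addxx addr0.
  + by move=> x; rewrite !big_cons big_nil /colkey /= !addr0.
- apply: (key_main (KU := [:: (j.+2, false); (j.+2, true)]) (KD := [:: (j.+1, false); (j, true)])
     (L := E j.+1)) => //; try comb.
  + exact: E_add.
  + move=> x; rewrite !big_cons big_nil /colkey /=.
    by rewrite addr0 [(E j.+2 x + _)%R]addrC -addrA mxF2_addxx addr0.
  + by move=> x; rewrite !big_cons big_nil /colkey /= addr0 -addrA mxF2_addxx addr0.
Qed.

Lemma caseX j v (Er : {set 'I_N}) p : (j <= s.+1)%N -> (2 <= p)%N -> m = (2 * p - 1)%N ->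
  nd j false v \in Er ->
  [/\ (#|Er| <= p)%N -> allows_repair M 2 (~: Er) (nd j false v),
      (#|Er| <= 2 * p - 1)%N -> allows_repair M 3 (~: Er) (nd j false v),
      (#|Er| <= 2 * p)%N -> allows_repair M 4 (~: Er) (nd j false v) &
      (#|Er| <= 3 * p - 1)%N -> allows_repair M 5 (~: Er) (nd j false v)].
Proof.
move=> hj hp hm cE.
have Ladd i x y : (E i (x + y) + Edn i (x + y) = (E i x + Edn i x) + (E i y + Edn i y))%R.
  by rewrite E_add Edn_add addrACA.
case: j hj cE => [|[|j]] hj cE.
- apply: (key_main (KU := [:: (0, true)]) (KD := [:: (1, false); (1, true)])
     (L := fun x => (E 0%N x + Edn 0%N x)%R)) => //; try comb.
  + by move=> x; rewrite !big_cons big_nil /colkey /=.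
  + move=> x; rewrite !big_cons big_nil /colkey /=.
    by rewrite !addr0 [(E 1%N x + _)%R]addrC -addrA mxF2_addxx addr0.
- have [le1|gt1] := leqP 1 s.
  + apply: (key_main (KU := [:: (1, true); (0, true)]) (KD := [:: (2, false); (2, true); (0, false)])
       (L := fun x => (E 1%N x + Edn 1%N x)%R)) => //; try comb.
    * by move=> x; rewrite !big_cons big_nil /colkey /= addr0.
    * move=> x; rewrite !big_cons big_nil /colkey /=.
      by rewrite !addr0 [(E 2%N x + _)%R]addrC -!addrA [(E 2%N x + (_ + _))%R]addrA mxF2_addxx add0r.
  + have s0 : s = 0%N by lia.
    have E1 x : E 1 x = 0%R by rewrite E_gt // s0.
    apply: (key_main (KU := [:: (1, true); (0, true)]) (KD := [:: (0, false)])
       (L := fun x => (E 1%N x + Edn 1%N x)%R)) => //; try comb.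
    * by move=> x; rewrite !big_cons big_nil /colkey /= addr0.
    * by move=> x; rewrite !big_cons big_nil /colkey /= !E1 !addr0 add0r.
- have [le1|gt1] := leqP j.+2 s.
  + apply: (key_main (KU := [:: (j.+2, true); (j.+1, true)])
       (KD := [:: (j.+3, false); (j.+3, true); (j.+1, false); (j, true)])
       (L := fun x => E j.+2 x + Edn j.+2 x)%R) => //; try comb.
    * by move=> x; rewrite !big_cons big_nil /colkey /= addr0.
    * move=> x; rewrite !big_cons big_nil /colkey /=.
      rewrite addr0 [(E j.+3 x + _)%R]addrC -!addrA mxF2_addxx addr0.
      by rewrite [(E j.+3 x + (_ + _))%R]addrA mxF2_addxx add0r.
  + have sj : s = j.+1 by lia.
    have E2 x : E j.+2 x = 0%R by rewrite E_gt // sj.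
    apply: (key_main (KU := [:: (j.+2, true); (j.+1, true)])
       (KD := [:: (j.+1, false); (j, true)])
       (L := fun x => E j.+2 x + Edn j.+2 x)%R) => //; try comb.
    * by move=> x; rewrite !big_cons big_nil /colkey /= addr0.
    * move=> x; rewrite !big_cons big_nil /colkey /= !E2 add0r addr0.
      by rewrite -addrA mxF2_addxx addr0.
Qed.

Lemma caseZ v (Er : {set 'I_N}) p r : (2 <= p)%N -> m = (2 * p - 1)%N -> (2 <= r)%N ->
  nd s.+1 true v \in Er -> (#|Er| <= 3 * p - 1)%N ->
  allows_repair M r (~: Er) (nd s.+1 true v).
Proof.
move=> hp hm hr cE hE.
have hs : (s.+1 <= s.+1)%N by [].
have h0 : (0 <= s.+1)%N by [].
have colc : col (nd s.+1 true v) M = 0%R by rewrite col_nd // E_gt.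
pose S := enum [pred a : 'I_m | a != v].
pose L1 := [seq [set nd s.+1 true a] | a <- S].
pose S2 := enum 'I_m.
pose L2 := [seq [set nd 0 false a; nd 0 true a] | a <- S2].
apply: (@from_list _ _ M _ r 1 (L1 ++ L2)) => //.
- move=> J; rewrite mem_cat => /orP [] /mapP [a aS ->].
  + rewrite mem_enum inE in aS; split.
    * by rewrite cards1.
    * by rewrite inE; apply: contra aS => /eqP /nd_inj [] // _ _ ->.
    * by rewrite big_set1 colc col_nd // E_gt.
    * by rewrite cards1; apply: leq_trans hr.
  + have ne : nd 0 false a != nd 0 true a by apply/negP => /eqP /nd_inj [].
    split.
    * by rewrite cards2 ne.
    * by rewrite !inE; apply/norP; split; apply/negP => /eqP /nd_inj [].
    * by rewrite colc big_setU1 ?inE // big_set1 !col_nd //= addr0 mxF2_addxx.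
    * by rewrite cards2 ne.
- move=> u; rewrite count_cat (@count_map _ _ _ _ S) (@count_map _ _ _ _ S2).
  have b1 : (count (fun a => u \in [set nd s.+1 true a]) S <= (lev u == s.+1))%N.
    apply: count_le1b; first exact: enum_uniq.
      by move=> a a' _ _; rewrite !inE => /eqP -> /eqP /nd_inj [].
    by move=> a _; rewrite inE => /eqP ->; rewrite lev_nd.
  have b2 : (count (fun a => u \in [set nd 0 false a; nd 0 true a]) S2 <= (lev u == 0%N))%N.
    apply: count_le1b; first exact: enum_uniq.
      by move=> a a' _ _; rewrite !inE => /orP [] /eqP -> /orP [] /eqP /nd_inj [].
    by move=> a _; rewrite !inE => /orP [] /eqP ->; rewrite lev_nd.
  apply: leq_trans (leq_add b1 b2) _; by case: (lev u) => [|x] /=; rewrite ?addn0 ?leq_b1.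
- rewrite size_cat !size_map /S2 -cardE -enumT -cardT.
  rewrite (_ : #|[pred a : 'I_m | a != v]| = m.-1); last by rewrite -[in RHS](card_ord m) -(cardC1 v); apply: eq_card.
  by rewrite card_ord; apply: ar6 hp hm hE.
Qed.

End Conc.
Lemma all_cases k s (G : 'M['F_2]_(k, 2 ^ k - 1)) (hG : is_simplex_gen G)
    (Er : {set 'I_(s.+2 * um_n k)}) p i :
  (2 <= p)%N -> (2 ^ k - 1 = 2 * p - 1)%N -> i \in Er ->
  [/\ (#|Er| <= p)%N -> allows_repair (Gtotal s G) 2 (~: Er) i,
      (#|Er| <= 2 * p - 1)%N -> allows_repair (Gtotal s G) 3 (~: Er) i,
      (#|Er| <= 2 * p)%N -> allows_repair (Gtotal s G) 4 (~: Er) i &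
      (#|Er| <= 3 * p - 1)%N -> allows_repair (Gtotal s G) 5 (~: Er) i].
Proof.
move=> hp hm iE.
have [j [h [b [hj ei]]]] := nd_surj i.
subst i.
case: h iE => iE.
- have [js|js] := leqP j s; first exact: caseY.
  have ej : j = s.+1 by lia.
  subst j.
  split=> hE; apply: (caseZ G (p := p)) => //; apply: leq_trans hE _; lia.
- exact: caseX.
Qed.

Lemma pow_half k : (2 <= k)%N -> (2 ^ k = 2 * 2 ^ k.-1)%N /\ (2 <= 2 ^ k.-1)%N.
Proof.
case: k => [|[|k']] // _; split; first by rewrite expnS.
by rewrite /= expnS; have := expn_gt0 2 k'; lia.
Qed.

Theorem theorem5p4 (k : nat) (hk : (2 <= k)%N) (s : nat)
    (G : 'M['F_2]_(k, 2 ^ k - 1)) (hG : is_simplex_gen G)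
    (E : {set 'I_(s.+2 * um_n k)}) :
    [/\ (#|E| <= 2 ^ k.-1)%N -> parallel_repair (Gtotal s G) 2 E,
        (#|E| <= 2 ^ k - 1)%N -> parallel_repair (Gtotal s G) 3 E,
        (#|E| <= 2 ^ k)%N -> parallel_repair (Gtotal s G) 4 E &
        (#|E| <= 2 ^ k + 2 ^ k.-1 - 1)%N -> parallel_repair (Gtotal s G) 5 E].
Proof.
have [h2k hp] := pow_half hk.
have hm : (2 ^ k - 1 = 2 * 2 ^ k.-1 - 1)%N by rewrite h2k.
split=> hE i iE; have [a b c d] := all_cases hG hp hm iE.
- exact: a.
- by apply: b; rewrite -hm.
- by apply: c; rewrite -h2k.
- apply: d; apply: leq_trans hE _; rewrite h2k; clear; lia.
Qed.
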